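(* Let $A_i=\begin{pmatrix}a_i&c_i\\ c_i&b_i\end{pmatrix}$, $i=1,2$, be $2\times2$ positive semidefinite matrices with non-negative real entries. If $a_1\le a_2$, $b_1\le b_2$ and $c_1\le c_2$, then $|||A_1|||\le|||A_2|||$ for every unitarily invariant norm $|||\cdot|||$. *)

(* Defs.v *)
From HB Require Import structures.
From mathcomp Require Import all_boot all_order all_algebra.
Set Implicit Arguments. Unset Strict Implicit. Unset Printing Implicit Defensive.
Import Order.TTheory GRing.Theory Num.Theory.
Local Open Scope ring_scope.

Definition adjmx (C : numClosedFieldType) m n (A : 'M[C]_(m, n)) : 'M[C]_(n, m) :=
  (map_mx Num.conj A)^T.

Definition unitary (C : numClosedFieldType) n (U : 'M[C]_n) : Prop :=
  U *m adjmx U = 1%:M.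

(* A matrix norm on 'M[C]_n; values lie in C and are nonnegative (hence real). *)
Definition is_matrix_norm (C : numClosedFieldType) n (N : 'M[C]_n -> C) : Prop :=
  [/\ forall A, 0 <= N A,
      forall A, N A = 0 -> A = 0,
      forall (a : C) A, N (a *: A) = `|a| * N A
    & forall A B, N (A + B) <= N A + N B].

Definition unitarily_invariant_norm (C : numClosedFieldType) n (N : 'M[C]_n -> C)
  : Prop :=
  is_matrix_norm N /\
  forall U V A, unitary U -> unitary V -> N (U *m A *m V) = N A.

Definition psd (C : numClosedFieldType) n (A : 'M[C]_n) : Prop :=
  adjmx A = A /\ forall x : 'cV[C]_n, 0 <= (adjmx x *m A *m x) 0 0.

Definition sym2 (C : numClosedFieldType) (a b c : C) : 'M[C]_2 :=
  \matrix_(i < 2, j < 2)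
    (if (i == 0 :> nat) && (j == 0 :> nat) then a
     else if (i == 1 :> nat) && (j == 1 :> nat) then b else c).

(* Main.v *)
Require Import Defs.
From HB Require Import structures.
From mathcomp Require Import all_boot all_order all_algebra.
From mathcomp Require Import ring lra.
Import Order.TTheory GRing.Theory Num.Theory.
Local Open Scope ring_scope.

Section S.
Variable C : numClosedFieldType.

Definition m2 (p q r s : C) : 'M[C]_2 := \matrix_(i<2,j<2)
  if i == 0 :> nat then (if j == 0 :> nat then p else q)
  else (if j == 0 :> nat then r else s).

Lemma m2_eq p q r s p' q' r' s' : p = p' -> q = q' -> r = r' -> s = s' ->
  m2 p q r s = m2 p' q' r' s'.
Proof. by move=> -> -> -> ->. Qed.

Lemma m2_mul a b c d e f g h : m2 a b c d *m m2 e f g h =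
  m2 (a*e+b*g) (a*f+b*h) (c*e+d*g) (c*f+d*h).
Proof.
apply/matrixP => i j; rewrite !mxE !big_ord_recl big_ord0 !mxE addr0.
by case: i => [[|[|i]] Hi] //; case: j => [[|[|j]] Hj].
Qed.

Lemma m2_adj a b c d : adjmx (m2 a b c d) = m2 a^* c^* b^* d^*.
Proof.
apply/matrixP => i j; rewrite !mxE.
by case: i => [[|[|i]] Hi] //; case: j => [[|[|j]] Hj].
Qed.

Lemma m2_add a b c d e f g h : m2 a b c d + m2 e f g h = m2 (a+e) (b+f) (c+g) (d+h).
Proof.
apply/matrixP => i j; rewrite !mxE.
by case: i => [[|[|i]] Hi] //; case: j => [[|[|j]] Hj].
Qed.

Lemma m2_scale k a b c d : k *: m2 a b c d = m2 (k*a) (k*b) (k*c) (k*d).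
Proof.
apply/matrixP => i j; rewrite !mxE.
by case: i => [[|[|i]] Hi] //; case: j => [[|[|j]] Hj].
Qed.

Lemma m2_1 : (1%:M : 'M[C]_2) = m2 1 0 0 1.
Proof.
apply/matrixP => i j; rewrite !mxE.
by case: i => [[|[|i]] Hi] //; case: j => [[|[|j]] Hj].
Qed.

Lemma sym2_m2 a b c : sym2 a b c = m2 a c c b.
Proof.
apply/matrixP => i j; rewrite !mxE.
by case: i => [[|[|i]] Hi] //; case: j => [[|[|j]] Hj].
Qed.

Lemma m2_unitary a b c d : a \is Num.real -> b \is Num.real ->
  c \is Num.real -> d \is Num.real ->
  a*a+b*b = 1 -> a*c+b*d = 0 -> c*c+d*d = 1 -> unitary (m2 a b c d).
Proof.
move=> ra rb rc rd h1 h2 h3; rewrite /unitary m2_adj m2_mul m2_1 !conj_Creal //.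
apply: m2_eq => //; by rewrite -h2 mulrC [b*_]mulrC.
Qed.

Variable N : 'M[C]_2 -> C.
Hypothesis HN : unitarily_invariant_norm N.

Definition g x y := N (sym2 x y 0).

Lemma g_swap x y : g x y = g y x.
Proof.
case: HN => _ HU; rewrite /g -(HU (m2 0 1 1 0) (m2 0 1 1 0)); last first.
- by apply: m2_unitary; rewrite ?real0 ?real1 //; ring.
- by apply: m2_unitary; rewrite ?real0 ?real1 //; ring.
congr N; rewrite !sym2_m2 !m2_mul; apply: m2_eq; ring.
Qed.

Lemma g_opp x y : g x y = g (- x) y.
Proof.
case: HN => _ HU; rewrite /g -(HU (m2 (-1) 0 0 1) (m2 1 0 0 1)); last first.
- by apply: m2_unitary; rewrite ?real0 ?real1 //; ring.
- by apply: m2_unitary; rewrite ?real0 ?real1 ?realN //; ring.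
congr N; rewrite !sym2_m2 !m2_mul; apply: m2_eq; ring.
Qed.

Lemma N_convex (al : C) A B : 0 <= al -> al <= 1 -> N A = N B ->
  N (al *: A + (1 - al) *: B) <= N B.
Proof.
move=> h0 h1 hAB; case: HN => [[_ _ Hs Ht] _].
apply: le_trans (Ht _ _) _; rewrite !Hs !ger0_norm ?subr_ge0 // hAB.
by rewrite -mulrDl addrC subrK mul1r.
Qed.


Lemma g_mono1 x x' y : 0 <= x -> x <= x' -> g x y <= g x' y.
Proof.
move=> hx hxx.
have hx' : 0 <= x' by apply: le_trans hxx.
case: (eqVneq x' 0) => [e|nz].
  have -> : x = 0 by apply/le_anti; rewrite hx andbT -e.
  by rewrite e.
have px : 0 < x' by rewrite lt_def nz hx'.
set al := (x' - x) / (2 * x').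
have h0 : 0 <= al by rewrite divr_ge0 ?subr_ge0 ?mulr_ge0 ?ler0n.
have h1 : al <= 1.
  rewrite ler_pdivrMr ?mulr_gt0 ?ltr0n // mul1r -subr_ge0.
  have -> : 2 * x' - (x' - x) = x' + x by ring.
  exact: addr_ge0.
have := @N_convex al (sym2 (-x') y 0) (sym2 x' y 0) h0 h1.
rewrite -/(g (-x') y) -/(g x' y) -g_opp => /(_ erefl).
congr (_ <= _); rewrite /g; congr N.
rewrite !sym2_m2 !m2_scale m2_add; apply: m2_eq; rewrite /al; try field; try ring.
all: exact: nz.
Qed.

Lemma g_mono2 x y y' : 0 <= y -> y <= y' -> g x y <= g x y'.
Proof. by move=> h1 h2; rewrite g_swap [g x y']g_swap g_mono1. Qed.

Lemma g_maj n1 m1 m2 : m2 <= n1 -> n1 <= m1 -> g n1 (m1 + m2 - n1) <= g m1 m2.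
Proof.
move=> h1 h2.
case: (eqVneq m1 m2) => [e|nz].
  have e1 : n1 = m1 by apply/le_anti; rewrite h2 e h1.
  by rewrite e1 addrC addKr.
have pm : 0 < m1 - m2 by rewrite subr_gt0 lt_def nz (le_trans h1 h2).
set s := (m1 - n1) / (m1 - m2).
have h0 : 0 <= s by apply: divr_ge0; [rewrite subr_ge0 | exact: ltW].
have hs1 : s <= 1.
  by rewrite ler_pdivrMr // mul1r lerD2l lerN2.
have := @N_convex s (sym2 m2 m1 0) (sym2 m1 m2 0) h0 hs1.
rewrite -/(g m2 m1) -/(g m1 m2) -g_swap => /(_ erefl).
congr (_ <= _); rewrite /g; congr N.
have nz' : m1 - m2 != 0 by rewrite subr_eq0.
rewrite !sym2_m2 !m2_scale m2_add; apply: m2_eq; rewrite /s; try field; try ring.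
all: exact: nz'.
Qed.


Lemma eig a b c : a \is Num.real -> b \is Num.real -> c \is Num.real ->
  N (sym2 a b c) =
  g ((a + b) / 2 + sqrtC (((a - b) / 2) ^+ 2 + c ^+ 2))
    ((a + b) / 2 - sqrtC (((a - b) / 2) ^+ 2 + c ^+ 2)).
Proof.
move=> ra rb rc.
set t := (a + b) / 2; set u := (a - b) / 2.
set r := sqrtC _.
have n20 : (2 : C) != 0 by rewrite pnatr_eq0.
have rt : t \is Num.real.
  by apply: realM; [exact: realD | by rewrite realV ger0_real ?ler0n].
have ru : u \is Num.real.
  by apply: realM; [exact: realB | by rewrite realV ger0_real ?ler0n].
have hq : 0 <= u ^+ 2 + c ^+ 2.
  by rewrite addr_ge0 ?real_exprn_even_ge0.
have r0 : 0 <= r by rewrite sqrtC_ge0.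
have rr : r \is Num.real by exact: ger0_real.
have hr2 : r ^+ 2 = u ^+ 2 + c ^+ 2 by rewrite sqrtCK.
have hur : `|u| <= r.
  rewrite -(sqrCK (normr_ge0 u)) real_normK // ler_sqrtC ?lerDl ?real_exprn_even_ge0 //.
  by rewrite nnegrE real_exprn_even_ge0.
have hru : 0 <= r + u.
  rewrite -[u]opprK subr_ge0; apply: le_trans hur.
  by rewrite -normrN real_ler_norm ?rpredN.
have hc2 : c ^+ 2 = r ^+ 2 - u ^+ 2 by rewrite hr2 addrC addKr.
case: (eqVneq (r + u) 0) => [e|nz].
  have eu : u = - r by apply/eqP; rewrite -subr_eq0 opprK addrC e.
  have ec : c = 0 by apply/eqP; rewrite -sqrf_eq0 hc2 eu sqrrN subrr.
  have er : r = - u by rewrite eu opprK.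
  rewrite g_swap /g; congr N; rewrite !sym2_m2 ec er; apply: m2_eq => //;
    rewrite /t /u; field; done.
have rnz : r != 0.
  apply: contraNneq nz => e; have : `|u| <= 0 by rewrite -e.
  by rewrite normr_le0 => /eqP ->; rewrite e addr0.
set n := sqrtC (2 * r * (r + u)).
have hn0 : 0 <= 2 * r * (r + u) by rewrite !mulr_ge0 ?ler0n.
have hn2 : n ^+ 2 = 2 * r * (r + u) by rewrite sqrtCK.
have rn : n \is Num.real by apply: sqrtC_real.
have nn : n != 0.
  by rewrite -sqrf_eq0 hn2 !mulf_neq0.
set x := (u + r) / n; set y := c / n.
have rx : x \is Num.real by apply: realM; [exact: realD | by rewrite realV].
have ry : y \is Num.real by apply: realM; [done | by rewrite realV].
have hxx : x * x = (u + r) / (2 * r).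
  rewrite /x -expr2 expr_div_n hn2; field.
  by rewrite rnz nz.
have hyy : y * y = (r - u) / (2 * r).
  rewrite /y -expr2 expr_div_n hn2 hc2; field.
  by rewrite rnz nz.
have hxy : x * y = c / (2 * r).
  rewrite /x /y mulf_div -expr2 hn2; field.
  by rewrite rnz nz.
case: HN => _ HU.
rewrite /g -(HU (m2 x (-y) y x) (m2 x y (-y) x) (sym2 (t + r) (t - r) 0)); first last.
- apply: m2_unitary; rewrite ?rpredN //.
  + by transitivity (x * x + y * y); [ring | rewrite hxx hyy; field].
  + by ring.
  + by transitivity (x * x + y * y); [ring | rewrite hxx hyy; field].
- apply: m2_unitary; rewrite ?rpredN //.
  + by transitivity (x * x + y * y); [ring | rewrite hxx hyy; field].
  + by ring.
  + by transitivity (x * x + y * y); [ring | rewrite hxx hyy; field].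
congr N; rewrite !sym2_m2 !m2_mul; apply: m2_eq.
- symmetry; transitivity ((t + r) * (x * x) + (t - r) * (y * y)); first by ring.
  by rewrite hxx hyy /t /u; field.
- symmetry; transitivity (2 * r * (x * y)); first by ring.
  by rewrite hxy; field.
- symmetry; transitivity (2 * r * (x * y)); first by ring.
  by rewrite hxy; field.
- symmetry; transitivity ((t + r) * (y * y) + (t - r) * (x * x)); first by ring.
  by rewrite hxx hyy /t /u; field.
Qed.


Lemma abs_le_r (u c : C) : u \is Num.real -> c \is Num.real ->
  `|u| <= sqrtC (u ^+ 2 + c ^+ 2).
Proof.
move=> ru rc.
rewrite -(sqrCK (normr_ge0 u)) real_normK // ler_sqrtC ?lerDl ?real_exprn_even_ge0 //.
  by rewrite nnegrE real_exprn_even_ge0.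
by rewrite nnegrE addr_ge0 ?real_exprn_even_ge0.
Qed.

Lemma r_pm (u c : C) : u \is Num.real -> c \is Num.real ->
  0 <= sqrtC (u ^+ 2 + c ^+ 2) + u /\ 0 <= sqrtC (u ^+ 2 + c ^+ 2) - u.
Proof.
move=> ru rc; have h := @abs_le_r u c ru rc; set r := sqrtC _ in h *; split.
  rewrite -[u]opprK subr_ge0; apply: le_trans h.
  by rewrite -normrN real_ler_norm ?rpredN.
by rewrite subr_ge0; apply: le_trans h; rewrite real_ler_norm.
Qed.

Definition cv (p q : C) : 'cV[C]_2 := \col_(i < 2) (if i == 0 :> nat then p else q).

Lemma qform (a b c p q : C) : p \is Num.real -> q \is Num.real ->
  (adjmx (cv p q) *m sym2 a b c *m cv p q) 0 0 = a * p ^+ 2 + 2 * c * p * q + b * q ^+ 2.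
Proof.
move=> rp rq.
rewrite /adjmx !mxE !big_ord_recl !big_ord0 !mxE !big_ord_recl !big_ord0 !mxE /=.
rewrite !conj_Creal //; ring.
Qed.

Lemma psd_det (a b c : C) : 0 <= a -> 0 <= b -> 0 <= c -> psd (sym2 a b c) -> c ^+ 2 <= a * b.
Proof.
move=> ha hb hc [_ hq].
have ra := ger0_real ha; have rb := ger0_real hb; have rc := ger0_real hc.
case: (eqVneq a 0) => [a0|anz].
  have := hq (cv (- (b + 1)) c); rewrite qform ?rpredN ?rpredD ?rpred1 //.
  have -> : a * (- (b + 1)) ^+ 2 + 2 * c * - (b + 1) * c + b * c ^+ 2 =
     - ((b + 2) * c ^+ 2) by rewrite a0; ring.
  rewrite oppr_ge0 pmulr_rle0; last by rewrite ltr_wpDl // ltr0n.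
  by rewrite a0 mul0r.
have pa : 0 < a by rewrite lt_def anz ha.
have := hq (cv c (- a)); rewrite qform ?rpredN //.
have -> : a * c ^+ 2 + 2 * c * c * - a + b * (- a) ^+ 2 = a * (a * b - c ^+ 2) by ring.
by rewrite pmulr_rge0 // subr_ge0.
Qed.

Lemma main_sec (a1 b1 c1 a2 b2 c2 : C)
  (ha1 : 0 <= a1) (hb1 : 0 <= b1) (hc1 : 0 <= c1)
  (ha2 : 0 <= a2) (hb2 : 0 <= b2) (hc2 : 0 <= c2)
  (hA1 : psd (sym2 a1 b1 c1))
  (hab : a1 <= a2) (hbb : b1 <= b2) (hcc : c1 <= c2) :
    N (sym2 a1 b1 c1) <= N (sym2 a2 b2 c2).
Proof.
have ra1 := ger0_real ha1; have rb1 := ger0_real hb1; have rc1 := ger0_real hc1.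
have ra2 := ger0_real ha2; have rb2 := ger0_real hb2; have rc2 := ger0_real hc2.
rewrite !eig //.
have n20 : (2 : C) != 0 by rewrite pnatr_eq0.
set t1 := (a1 + b1) / 2; set u1 := (a1 - b1) / 2.
set t2 := (a2 + b2) / 2; set u2 := (a2 - b2) / 2.
have ru1 : u1 \is Num.real.
  by apply: realM; [exact: realB | by rewrite realV ger0_real ?ler0n].
have ru2 : u2 \is Num.real.
  by apply: realM; [exact: realB | by rewrite realV ger0_real ?ler0n].
have hi2 : 0 <= (2 : C)^-1 by rewrite invr_ge0 ler0n.
have t1p : 0 <= t1 by rewrite mulr_ge0 ?addr_ge0.
have t2p : 0 <= t2 by rewrite mulr_ge0 ?addr_ge0.
have t12 : t1 <= t2 by rewrite ler_wpM2r // lerD.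
set r1 := sqrtC (u1 ^+ 2 + c1 ^+ 2); set r2 := sqrtC (u2 ^+ 2 + c2 ^+ 2).
have r1p : 0 <= r1 by rewrite sqrtC_ge0 addr_ge0 ?real_exprn_even_ge0.
have r2p : 0 <= r2 by rewrite sqrtC_ge0 addr_ge0 ?real_exprn_even_ge0.
have hr2 : r2 ^+ 2 = u2 ^+ 2 + c2 ^+ 2 by rewrite sqrtCK.
have [pm2 pm2'] := @r_pm u2 c2 ru2 rc2.
have hdet := @psd_det a1 b1 c1 ha1 hb1 hc1 hA1.
have hq1 : 0 <= u1 ^+ 2 + c1 ^+ 2 by rewrite addr_ge0 ?real_exprn_even_ge0.
have l2p : 0 <= t1 - r1.
  rewrite subr_ge0 /r1 -(sqrCK t1p) ler_sqrtC ?nnegrE ?exprn_ge0 //.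
  rewrite -subr_ge0.
  have -> : t1 ^+ 2 - (u1 ^+ 2 + c1 ^+ 2) = a1 * b1 - c1 ^+ 2 by rewrite /t1 /u1; field.
  by rewrite subr_ge0.
have l1m1 : t1 + r1 <= t2 + r2.
  have Xp : 0 <= t2 - t1 + r2 by rewrite addr_ge0 // subr_ge0.
  suff h : r1 <= t2 - t1 + r2.
    apply: le_trans (lerD (lexx t1) h) _; rewrite le_eqVlt; apply/orP; left.
    by apply/eqP; ring.
  rewrite /r1 -(sqrCK Xp) ler_sqrtC ?nnegrE ?exprn_ge0 //.
  rewrite -subr_ge0.
  have E : (t2 - t1 + r2) ^+ 2 - (u1 ^+ 2 + c1 ^+ 2) =
     (a2 - a1) * (b2 - b1) + (a2 - a1) * (r2 + u2) + (b2 - b1) * (r2 - u2)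
     + (c2 - c1) * (c2 + c1).
    apply/eqP; rewrite -subr_eq0; apply/eqP.
    transitivity (r2 ^+ 2 - (u2 ^+ 2 + c2 ^+ 2)); last by rewrite hr2 subrr.
    by rewrite /t1 /t2 /u1 /u2; field.
  rewrite E; apply: addr_ge0; last by rewrite mulr_ge0 ?subr_ge0 ?addr_ge0.
  rewrite !addr_ge0 // mulr_ge0 // subr_ge0 //.
have l21 : t1 - r1 <= t1 + r1 by rewrite lerD2l -subr_ge0 opprK addr_ge0.
have m21 : t2 - r2 <= t2 by rewrite gerBl.
have m12 : t2 <= t2 + r2 by rewrite lerDl.
have sum : (t2 + r2) + (t2 - r2) = t2 + t2 by ring.
case/orP: (real_leVge (ger0_real t2p) (ger0_real (addr_ge0 t1p r1p))) => hc.
- have s1 : g (t1 + r1) (t1 - r1) <= g (t1 + r1) (t2 + r2 + (t2 - r2) - (t1 + r1)).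
    apply: g_mono2 => //.
    rewrite sum -subr_ge0.
    have -> : t2 + t2 - (t1 + r1) - (t1 - r1) = (t2 - t1) + (t2 - t1) by ring.
    by rewrite addr_ge0 // subr_ge0.
  apply: le_trans s1 _.
  apply: g_maj => //; exact: le_trans m21 hc.
- have s1 : g (t1 + r1) (t1 - r1) <= g t2 (t1 - r1).
    by apply: g_mono1 => //; exact: addr_ge0.
  have s2 : g t2 (t1 - r1) <= g t2 t2.
    by apply: g_mono2 => //; exact: le_trans l21 hc.
  apply: le_trans s1 _; apply: le_trans s2 _.
  have -> : g t2 t2 = g t2 (t2 + r2 + (t2 - r2) - t2) by rewrite sum addrK.
  exact: g_maj.
Qed.

End S.

Theorem mainTheorem10 (C : numClosedFieldType)
  (a1 b1 c1 a2 b2 c2 : C)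
  (ha1 : 0 <= a1) (hb1 : 0 <= b1) (hc1 : 0 <= c1)
  (ha2 : 0 <= a2) (hb2 : 0 <= b2) (hc2 : 0 <= c2)
  (hA1 : psd (sym2 a1 b1 c1)) (hA2 : psd (sym2 a2 b2 c2))
  (hab : a1 <= a2) (hbb : b1 <= b2) (hcc : c1 <= c2) :
  forall N : 'M[C]_2 -> C, unitarily_invariant_norm N ->
    N (sym2 a1 b1 c1) <= N (sym2 a2 b2 c2).
Proof.
move=> N HN; exact: main_sec.
Qed.
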